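(* Consider a network of $N$ nodes where each node performs a dichotomic measurement with outcomes in $\{0,1\}$, producing a distribution $p(x_1,\dots,x_N)$, and let $C$ be the $N\times N$ real matrix with entries $C_{\alpha\beta}=p(x_\alpha=0,x_\beta=0)-p(x_\alpha=0)p(x_\beta=0)$ for $\alpha\neq\beta$ and $C_{\alpha\alpha}=p(x_\alpha=0)(1-p(x_\alpha=0))$ (so that the covariance matrix is $\Gamma(\mathbf{v})=C\otimes(\mathbb{1}-\sigma_x)$). If the comparison matrix $M(C)$ has a negative eigenvalue, then the distribution $p$ is incompatible with a quantum network in which all sources are bipartite (each source distributes a quantum state to two nodes).
   Context: Quantum network: sources $m$ independently prepare states $\varrho_m$, whose subsystems go to the nodes in a set $\mathcal{C}_m$; each node $n$ performs a POVM $\{A^{(n)}_x\}$ on its received subsystems, and $p(x_1,\dots,x_N)=\mathrm{tr}[(A^{(1)}_{x_1}\otimes\cdots\otimes A^{(N)}_{x_N})\varrho_1\otimes\cdots\otimes\varrho_M]$. The comparison matrix of an $N\times N$ matrix $X$ is defined by $(M[X])_{ii}=|X_{ii}|$ and $(M[X])_{ij}=-|X_{ij}|$ for $i\neq j$. The covariance matrix is $\Gamma(\mathbf{v})=E(\mathbf{v}\mathbf{v}^\dagger)-E(\mathbf{v})E(\mathbf{v})^\dagger$ with $\mathbf{v}_{x_1,\dots,x_N}=|x_1\rangle+\dots+|x_N\rangle$, $|x_n\rangle$ a basis vector of mutually orthogonal spaces $\mathcal{V}_n\cong\mathbb{C}^2$. *)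

(* Defs.v *)
From HB Require Import structures.
From mathcomp Require Import all_boot all_order all_algebra.
Set Implicit Arguments. Unset Strict Implicit. Unset Printing Implicit Defensive.
Import Order.TTheory GRing.Theory Num.Theory.
Local Open Scope ring_scope.

(* Operators on a finite-dimensional
   Hilbert space with orthonormal basis indexed by a finType T are
   represented by their matrix entries T -> T -> C. *)

Section Quantum.
Variable C : numClosedFieldType.

Definition op (T : finType) := T -> T -> C.

Definition psd (T : finType) (A : op T) : Prop :=
  (forall i j, A j i = (A i j)^*) /\
  (forall u : T -> C, 0 <= \sum_i \sum_j (u i)^* * A i j * u j).

Definition trace (T : finType) (A : op T) : C := \sum_i A i i.

Definition density (T : finType) (rho : op T) : Prop :=
  psd rho /\ trace rho = 1.

Definition povm (X T : finType) (A : X -> op T) : Prop :=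
  (forall x, psd (A x)) /\
  (forall i j, \sum_x A x i j = (i == j)%:R).

(* ---- Bipartite quantum network ----
   N nodes, M sources; source m emits a bipartite state on two subsystems,
   labelled (m,false) and (m,true) ("half-edges"), sent to nodes
   node (m,false) and node (m,true).  Every subsystem has dimension d. *)

Definition halfedge (M : nat) := ('I_M * bool)%type.

(* basis of the global Hilbert space: one basis index per subsystem *)
Definition gconf (M d : nat) := {ffun halfedge M -> 'I_d}.

(* basis of the Hilbert space held by node n: subsystems received by n *)
Definition lconf (N M d : nat) (node : halfedge M -> 'I_N) (n : 'I_N) :=
  {ffun {s : halfedge M | node s == n} -> 'I_d}.

Definition restr (N M d : nat) (node : halfedge M -> 'I_N) (n : 'I_N)
  (g : gconf M d) : lconf d node n := [ffun s => g (val s)].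

(* matrix entries of rho_1 (x) ... (x) rho_M *)
Definition global_state (M d : nat) (rho : 'I_M -> op ('I_d * 'I_d)%type)
  : op (gconf M d) :=
  fun g g' => \prod_(m < M) rho m (g (m, false), g (m, true))
                                   (g' (m, false), g' (m, true)).

(* matrix entries of A^(1)_{x_1} (x) ... (x) A^(N)_{x_N} *)
Definition global_meas (N M d : nat) (node : halfedge M -> 'I_N)
  (A : forall n : 'I_N, 'I_2 -> op (lconf d node n)) (x : {ffun 'I_N -> 'I_2})
  : op (gconf M d) :=
  fun g g' => \prod_(n < N) A n (x n) (restr node n g) (restr node n g').

(* p(x) = tr[(A (x) ... (x) A) rho_1 (x) ... (x) rho_M] *)
Definition network_prob (N M d : nat) (node : halfedge M -> 'I_N)
  (rho : 'I_M -> op ('I_d * 'I_d)%type)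
  (A : forall n : 'I_N, 'I_2 -> op (lconf d node n)) (x : {ffun 'I_N -> 'I_2}) : C :=
  \sum_g \sum_g' global_meas A x g g' * global_state rho g' g.

Definition bipartite_qnet_compatible (N : nat) (p : {ffun 'I_N -> 'I_2} -> C)
  : Prop :=
  exists (M d : nat) (node : halfedge M -> 'I_N),
    (forall m : 'I_M, node (m, false) != node (m, true)) /\
    exists (rho : 'I_M -> op ('I_d * 'I_d)%type)
           (A : forall n : 'I_N, 'I_2 -> op (lconf d node n)),
      (forall m, density (rho m)) /\ (forall n, povm (A n)) /\
      (forall x, p x = network_prob rho A x).

Definition marg1 (N : nat) (p : {ffun 'I_N -> 'I_2} -> C) (a : 'I_N) : C :=
  \sum_(x : {ffun 'I_N -> 'I_2} | x a == 0%R) p x.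

Definition marg2 (N : nat) (p : {ffun 'I_N -> 'I_2} -> C) (a b : 'I_N) : C :=
  \sum_(x : {ffun 'I_N -> 'I_2} | (x a == 0%R) && (x b == 0%R)) p x.

Definition corr_mx (N : nat) (p : {ffun 'I_N -> 'I_2} -> C) : 'M[C]_N :=
  \matrix_(a, b) if a == b then marg1 p a * (1 - marg1 p a)
                 else marg2 p a b - marg1 p a * marg1 p b.

Definition comparison_mx (N : nat) (X : 'M[C]_N) : 'M[C]_N :=
  \matrix_(i, j) if i == j then `|X i i| else - `|X i j|.

End Quantum.

(* Main.v *)
Require Import Defs.
From HB Require Import structures.
From mathcomp Require Import all_boot all_order all_algebra.
From mathcomp Require Import ring.
From Stdlib Require Import FunctionalExtensionality.
Set Implicit Arguments. Unset Strict Implicit. Unset Printing Implicit Defensive.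
Import Order.TTheory GRing.Theory Num.Theory.
Local Open Scope ring_scope.

Module PF.
Local Open Scope ring_scope.

Section IP.
Variable C : numClosedFieldType.
Variable Z : finType.
Definition ip (u v : Z -> C) : C := \sum_z (u z)^* * v z.
Definition vsub (u v : Z -> C) : Z -> C := fun z => u z - v z.
Definition vscale (c : C) (u : Z -> C) : Z -> C := fun z => c * u z.

Lemma ip_ge0 u : 0 <= ip u u.
Proof. apply: sumr_ge0 => z _; rewrite mulrC; exact: mul_conjC_ge0. Qed.

Lemma ip_real u : ip u u \is Num.real.
Proof. exact: ger0_real (ip_ge0 u). Qed.

Lemma ip_conj u v : (ip u v)^* = ip v u.
Proof. rewrite /ip rmorph_sum; apply: eq_bigr => z _; by rewrite rmorphM /= conjCK mulrC. Qed.

Lemma ip_sumr (I : Type) (r : seq I) (P : pred I) (F : I -> Z -> C) u :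
  ip u (fun z => \sum_(i <- r | P i) F i z) = \sum_(i <- r | P i) ip u (F i).
Proof. rewrite /ip; under eq_bigr do rewrite mulr_sumr; exact: exchange_big. Qed.

Lemma ip_suml (I : Type) (r : seq I) (P : pred I) (F : I -> Z -> C) u :
  ip (fun z => \sum_(i <- r | P i) F i z) u = \sum_(i <- r | P i) ip (F i) u.
Proof.
rewrite -ip_conj ip_sumr rmorph_sum; apply: eq_bigr => i _; exact: ip_conj.
Qed.

Lemma ip_subr u v w : ip u (vsub v w) = ip u v - ip u w.
Proof. by rewrite /ip -sumrB; apply: eq_bigr => z _; rewrite mulrBr. Qed.
Lemma ip_subl u v w : ip (vsub u v) w = ip u w - ip v w.
Proof. by rewrite /ip -sumrB; apply: eq_bigr => z _; rewrite rmorphB mulrBl. Qed.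
Lemma ip_scaler c u v : ip u (vscale c v) = c * ip u v.
Proof. by rewrite /ip mulr_sumr; apply: eq_bigr => z _; rewrite /vscale mulrCA. Qed.
Lemma ip_scalel c u v : ip (vscale c u) v = c^* * ip u v.
Proof. by rewrite /ip mulr_sumr; apply: eq_bigr => z _; rewrite /vscale rmorphM mulrA. Qed.
Lemma ip0r u : ip u (fun _ => 0) = 0.
Proof. by rewrite /ip big1 // => z _; rewrite mulr0. Qed.

Lemma CS u v : `|ip u v| ^+ 2 <= ip u u * ip v v.
Proof.
set a := ip u u; set b := ip u v; set c := ip v v.
have a0 : 0 <= a := ip_ge0 u.
have ha : a^* = a by apply: conj_Creal; exact: ger0_real.
have [az|anz] := eqVneq a 0.
  have u0 : forall z, u z = 0.
    move=> z; have := @psumr_eq0P _ _ xpredT (fun z => (u z)^* * u z) _ az z isT.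
    move=> /(_ _)/eqP; rewrite mulf_eq0 conjC_eq0 orbb => /(_ _)/eqP; apply.
    by move=> i _; rewrite mulrC mul_conjC_ge0.
  have -> : b = 0 by rewrite /b /ip big1 // => z _; rewrite u0 conjC0 mul0r.
  by rewrite normr0 expr0n /= az mul0r.
have apos : 0 < a by rewrite lt_def anz a0.
have := ip_ge0 (vsub (vscale a v) (vscale b u)).
rewrite ip_subl !ip_subr !ip_scalel !ip_scaler -/a -/b -/c ha.
rewrite -(ip_conj u v) -/b.
have -> : a * (a * c) - a * (b * b^*) - (b^* * (a * b) - b^* * (b * a))
   = a * (a * c - b * b^*) by ring.
by rewrite pmulr_rge0 // subr_ge0 normCK.
Qed.
End IP.

Lemma amgm (C : numClosedFieldType) (x y c s t : C) :
  0 <= x -> 0 <= y -> 0 <= c -> 0 <= s -> 0 <= t -> c ^+ 2 <= x * y ->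
  2 * c * s * t <= x * s ^+ 2 + y * t ^+ 2.
Proof.
move=> x0 y0 c0 s0 t0 cxy.
have p0 : 0 <= 2 * c * s * t by rewrite !mulr_ge0.
have q0 : 0 <= x * s ^+ 2 + y * t ^+ 2 by rewrite addr_ge0 // mulr_ge0 // exprn_ge0.
rewrite -ler_sqr ?nnegrE //.
apply: (@le_trans _ _ (4%:R * (x * y) * s ^+ 2 * t ^+ 2)).
  have -> : (2 * c * s * t) ^+ 2 = 4%:R * c ^+ 2 * s ^+ 2 * t ^+ 2 by ring.
  by rewrite ler_wpM2r ?exprn_ge0 // ler_wpM2r ?exprn_ge0 // ler_wpM2l.
rewrite -subr_ge0.
have -> : (x * s ^+ 2 + y * t ^+ 2) ^+ 2 - 4%:R * (x * y) * s ^+ 2 * t ^+ 2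
  = (x * s ^+ 2 - y * t ^+ 2) ^+ 2 by ring.
apply: real_exprn_even_ge0 => //; apply: rpredB; apply: ger0_real;
  by rewrite mulr_ge0 // exprn_ge0.
Qed.

Section Abstract.
Variables (C : numClosedFieldType) (Z : finType) (N M : nat).
Variable P : {set 'I_M} -> (Z -> C) -> Z -> C.
Variable v : 'I_N -> Z -> C.
Variable S : 'I_N -> {set 'I_M}.
Hypothesis P_adj : forall T u w, ip (P T u) w = ip u (P T w).
Hypothesis P_comp : forall T U w, P T (P U w) = P (T :|: U) w.
Hypothesis P_all : forall a, P setT (v a) = fun _ => 0.
Hypothesis P_loc : forall a, P (~: S a) (v a) = v a.
Hypothesis bip : forall a b b', b != a -> b' != a -> b != b' ->
  S a :&: S b :&: S b' = set0.

Let w a b := P (~: (S a :&: S b)) (v a).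

Lemma w_cross a b : ip (v a) (v b) = ip (w a b) (w b a).
Proof.
rewrite /w (setIC (S b)) P_adj P_comp setUid setCI -P_comp P_loc -P_adj.
by rewrite P_loc.
Qed.

Lemma w_norm a b : ip (w a b) (v a) = ip (w a b) (w a b).
Proof. by rewrite /w P_adj [in RHS]P_adj P_comp setUid. Qed.

Lemma w_orth a b b' : b != a -> b' != a -> b != b' -> ip (w a b) (w a b') = 0.
Proof.
move=> ba b'a bb'; rewrite /w P_adj P_comp.
have -> : ~: (S a :&: S b) :|: ~: (S a :&: S b') = setT.
  by rewrite -setCI setIACA setIid setIA bip // setC0.
by rewrite P_all ip0r.
Qed.

Lemma w_bound a : \sum_(b | b != a) ip (w a b) (w a b) <= ip (v a) (v a).
Proof.
set W := fun z => \sum_(b | b != a) w a b z.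
set X := \sum_(b | b != a) ip (w a b) (w a b).
have hWv : ip W (v a) = X by rewrite /W ip_suml; apply: eq_bigr => b _; exact: w_norm.
have hvW : ip (v a) W = X.
  rewrite -ip_conj hWv /X rmorph_sum; apply: eq_bigr => b _.
  exact/conj_Creal/ip_real.
have hWW : ip W W = X.
  rewrite {1}/W ip_suml; apply: eq_bigr => b ba.
  rewrite /W ip_sumr (bigD1 b) //= big1 ?addr0 // => b' /andP[b'a b'b].
  by apply: w_orth; rewrite // eq_sym.
have := ip_ge0 (vsub (v a) W).
by rewrite ip_subl !ip_subr hWv hvW hWW subrr subr0 subr_ge0.
Qed.

Lemma abstract_ineq (t : 'I_N -> C) : (forall a, 0 <= t a) ->
  \sum_a \sum_(b | b != a) `|ip (v a) (v b)| * (t a * t b)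
    <= \sum_a ip (v a) (v a) * t a ^+ 2.
Proof.
move=> t0.
set x := fun a b => ip (w a b) (w a b).
have step : forall a b, b != a ->
    2 * `|ip (v a) (v b)| * t a * t b <= x a b * t a ^+ 2 + x b a * t b ^+ 2.
  move=> a b ba; apply: amgm; rewrite ?ip_ge0 ?t0 //.
  by rewrite w_cross CS.
have h2 : 2 * (\sum_a \sum_(b | b != a) `|ip (v a) (v b)| * (t a * t b))
   <= 2 * (\sum_a \sum_(b | b != a) x a b * t a ^+ 2).
  rewrite mulr_sumr.
  apply: (@le_trans _ _ (\sum_a \sum_(b | b != a) (x a b * t a ^+ 2 + x b a * t b ^+ 2))).
    apply: ler_sum => a _; rewrite mulr_sumr; apply: ler_sum => b ba.
    by move: (step a b ba); rewrite !mulrA.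
  rewrite mulr2n mulrDl mul1r.
  under eq_bigr do rewrite big_split /=.
  rewrite big_split /= lerD2l.
  rewrite (eq_bigr (fun a => \sum_b (if b != a then x b a * t b ^+ 2 else 0)));
    last by move=> a _; rewrite big_mkcond.
  rewrite exchange_big /= le_eqVlt; apply/orP; left; apply/eqP/eq_bigr => a _.
  by rewrite [RHS]big_mkcond /=; apply: eq_bigr => b _; rewrite eq_sym.
rewrite ler_pM2l ?ltr0n // in h2.
apply: (le_trans h2); apply: ler_sum => a _.
rewrite -mulr_suml mulrC [X in _ <= X]mulrC ler_wpM2l ?exprn_ge0 //.
exact: w_bound.
Qed.
End Abstract.

End PF.
Import PF.

Module PB.
Local Open Scope ring_scope.

Section Gsum.
Variables (M d : nat).
Definition toS (g : gconf M d) : {ffun 'I_M -> ('I_d * 'I_d)} :=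
  [ffun m => (g (m, false), g (m, true))].
Definition ofS (f : {ffun 'I_M -> ('I_d * 'I_d)}) : gconf M d :=
  [ffun s => if s.2 then (f s.1).2 else (f s.1).1].
Lemma toSK : cancel toS ofS.
Proof. by move=> g; apply/ffunP => -[m [|]]; rewrite !ffunE. Qed.
Lemma ofSK : cancel ofS toS.
Proof. by move=> f; apply/ffunP => m; rewrite !ffunE /=; case: (f m). Qed.

Lemma gsum_prod (R : comNzRingType) (G : 'I_M -> ('I_d * 'I_d) -> R) :
  \sum_(g : gconf M d) \prod_m G m (g (m, false), g (m, true)) =
  \prod_m \sum_k G m k.
Proof.
rewrite bigA_distr_bigA (reindex toS) /=; last first.
  by exists ofS => x _; [exact: toSK | exact: ofSK].
by apply: eq_bigr => g _; apply: eq_bigr => m _; rewrite ffunE.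
Qed.
End Gsum.

Lemma sum_delta_r (R : nzSemiRingType) (T : finType) (F : T -> R) (b : T) :
  \sum_k F k * (k == b)%:R = F b.
Proof.
rewrite (bigD1 b) //= eqxx mulr1 big1 ?addr0 // => k kb.
by rewrite (negbTE kb) mulr0.
Qed.
Lemma sum_delta_l (R : nzSemiRingType) (T : finType) (F : T -> R) (a : T) :
  \sum_k (a == k)%:R * F k = F a.
Proof.
rewrite (bigD1 a) //= eqxx mul1r big1 ?addr0 // => k ka.
by rewrite eq_sym (negbTE ka) mul0r.
Qed.

Section Source.
Variables (C : numClosedFieldType) (M d : nat) (J : finType).
Local Notation K := ('I_d * 'I_d)%type.
Variable L : 'I_M -> K -> J -> C.
Hypothesis Lnorm : forall m, \sum_k \sum_j L m k j * (L m k j)^* = 1.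

Definition Zt := (gconf M d * {ffun 'I_M -> J})%type.
Definition zm (z : Zt) m : K * J := ((z.1 (m, false), z.1 (m, true)), z.2 m).
Definition Lf m (kj : K * J) := L m kj.1 kj.2.
Definition kap (T : {set 'I_M}) m (k k' : K * J) :=
  if m \in T then Lf m k * (Lf m k')^* else (k == k')%:R.
Definition PK T (z z' : Zt) := \prod_m kap T m (zm z m) (zm z' m).
Definition Pop T (v : Zt -> C) : Zt -> C := fun z => \sum_z' PK T z z' * v z'.
Definition Psi (z : Zt) := \prod_m Lf m (zm z m).
Definition PsiT (T : {set 'I_M}) (z : Zt) := \prod_m (if m \in T then Lf m (zm z m) else 1).

Lemma core (F : 'I_M -> K * J -> C) :
  \sum_(z : Zt) \prod_m F m (zm z m) = \prod_m \sum_k F m k.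
Proof.
rewrite -(pair_big xpredT xpredT (fun g h => \prod_m F m (zm (g, h) m))) /=.
under eq_bigr => g _.
  rewrite -(bigA_distr_bigA (fun m j => F m ((g (m, false), g (m, true)), j))).
over.
rewrite /= (gsum_prod (fun m k => \sum_j F m (k, j))).
apply: eq_bigr => m _.
by rewrite (pair_big xpredT xpredT (fun k j => F m (k, j))) /=; apply: eq_bigr => -[].
Qed.

Lemma Lnorm' m : \sum_k (Lf m k)^* * Lf m k = 1.
Proof.
rewrite -(Lnorm m) (pair_big xpredT xpredT (fun k j => L m k j * (L m k j)^*)) /=.
by apply: eq_bigr => -[k j] _; rewrite mulrC.
Qed.

Lemma kap_comp T U m a b :
  \sum_k kap T m a k * kap U m k b = kap (T :|: U) m a b.
Proof.
rewrite /kap in_setU; case: (m \in T); case: (m \in U) => /=.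
- transitivity (Lf m a * (\sum_k (Lf m k)^* * Lf m k) * (Lf m b)^*).
    by rewrite mulr_sumr mulr_suml; apply: eq_bigr => k _; ring.
  by rewrite Lnorm' mulr1.
- by rewrite sum_delta_r.
- by rewrite (eq_bigr (fun k => (a == k)%:R * (Lf m k * (Lf m b)^*))) ?sum_delta_l.
- by rewrite (eq_bigr (fun k => (a == k)%:R * (k == b)%:R)) // sum_delta_l.
Qed.

Lemma PK_comp T U z z'' :
  \sum_z' PK T z z' * PK U z' z'' = PK (T :|: U) z z''.
Proof.
under eq_bigr do rewrite /PK -big_split /=.
rewrite (core (fun m k => kap T m (zm z m) k * kap U m k (zm z'' m))).
by apply: eq_bigr => m _; rewrite kap_comp.
Qed.

Lemma Pop_comp T U v : Pop T (Pop U v) = Pop (T :|: U) v.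
Proof.
apply: functional_extensionality => z; rewrite /Pop.
under eq_bigr do rewrite mulr_sumr.
rewrite exchange_big /=; apply: eq_bigr => z'' _.
by rewrite -PK_comp mulr_suml; apply: eq_bigr => z' _; rewrite mulrA.
Qed.

Lemma PK_adj T z z' : (PK T z z')^* = PK T z' z.
Proof.
rewrite /PK rmorph_prod; apply: eq_bigr => m _; rewrite /kap.
case: (m \in T); first by rewrite rmorphM /= conjCK mulrC.
by rewrite /= conjC_nat eq_sym.
Qed.

Lemma Pop_adj T u w : ip (Pop T u) w = ip u (Pop T w).
Proof.
rewrite /ip /Pop.
under eq_bigr do rewrite rmorph_sum mulr_suml.
rewrite exchange_big /=; apply: eq_bigr => z' _.
rewrite mulr_sumr; apply: eq_bigr => z _.
by rewrite rmorphM /= PK_adj; ring.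
Qed.

Lemma Pop_all v : Pop setT v = fun z => Psi z * ip Psi v.
Proof.
apply: functional_extensionality => z; rewrite /Pop /ip mulr_sumr.
apply: eq_bigr => z' _; rewrite /PK /kap.
under eq_bigr do rewrite in_setT.
by rewrite big_split /= -rmorph_prod mulrA.
Qed.

Lemma Psi_norm : ip Psi Psi = 1.
Proof.
rewrite /ip /Psi.
under eq_bigr do rewrite rmorph_prod -big_split /=.
rewrite (core (fun m k => (Lf m k)^* * Lf m k)).
by rewrite big1 // => m _; rewrite Lnorm'.
Qed.

Lemma Psi_split T z : Psi z = PsiT T z * PsiT (~: T) z.
Proof.
rewrite /Psi /PsiT -big_split /=; apply: eq_bigr => m _.
by rewrite in_setC; case: (m \in T); rewrite ?mulr1 ?mul1r.
Qed.

Lemma Pop_fact (T : {set 'I_M}) (f : Zt -> C) :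
  (forall z z', (forall m, m \notin T -> zm z m = zm z' m) -> f z = f z') ->
  Pop T (fun z => PsiT T z * f z) = fun z => PsiT T z * f z.
Proof.
move=> finv; apply: functional_extensionality => z; rewrite /Pop.
transitivity (\sum_z' PK T z z' * PsiT T z' * f z).
  apply: eq_bigr => z' _; rewrite mulrA.
  have [/forallP agree|] := boolP [forall m, (m \notin T) ==> (zm z m == zm z' m)].
    rewrite (finv z' z) // => m mT.
    by have /implyP/(_ mT)/eqP := agree m.
  rewrite negb_forall => /existsP[m]; rewrite negb_imply => /andP[mT ne].
  have -> : PK T z z' = 0.
    rewrite /PK (bigD1 m) //= /kap (negbTE mT) (negbTE ne) mul0r //.
  by rewrite !mul0r.
rewrite -mulr_suml; congr (_ * _).
under eq_bigr do rewrite /PK /PsiT -big_split /=.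
rewrite (core (fun m k => kap T m (zm z m) k * (if m \in T then Lf m k else 1))).
apply: eq_bigr => m _; rewrite /kap; case: (m \in T).
  transitivity (Lf m (zm z m) * \sum_k (Lf m k)^* * Lf m k).
    by rewrite mulr_sumr; apply: eq_bigr => k _; ring.
  by rewrite Lnorm' mulr1.
by rewrite (eq_bigr (fun k => (zm z m == k)%:R * 1)) ?sum_delta_l // => k _.
Qed.
End Source.

End PB.
Import PB.

Module PC.
Local Open Scope ring_scope.

Section Node.
Variable C : numClosedFieldType.
Variables (N M d : nat) (node : halfedge M -> 'I_N).
Local Notation G := (gconf M d).

Definition offQ (Q : pred 'I_N) (g g' : G) : bool :=
  [forall s, Q (node s) ==> (g s == g' s)].

Definition upd (a : 'I_N) (g : G) (l : lconf d node a) : G :=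
  [ffun s => if (insub s : option {s : halfedge M | node s == a}) is Some s'
             then l s' else g s].
Arguments upd : clear implicits.

Lemma offQ_sym Q g g' : offQ Q g g' = offQ Q g' g.
Proof.
by apply/forallP/forallP => H s; have := H s; rewrite eq_sym.
Qed.

Lemma restr_upd a g l : restr node a (upd a g l) = l.
Proof. by apply/ffunP => s; rewrite !ffunE valK. Qed.

Lemma upd_restr a g g' : offQ (predC1 a) g g' -> upd a g (restr node a g') = g'.
Proof.
move=> /forallP H; apply/ffunP => s; rewrite !ffunE.
case: insubP => [s' _ <-|]; first by rewrite ffunE.
by move=> nsa; have /implyP/(_ _)/eqP := H s; apply; rewrite /= nsa.
Qed.

Lemma offQ_upd a g l : offQ (predC1 a) g (upd a g l).
Proof.
apply/forallP => s; apply/implyP => /= nsa; rewrite ffunE insubF //.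
exact/negbTE.
Qed.

Lemma upd_upd a g l l' : upd a (upd a g l) l' = upd a g l'.
Proof.
by apply/ffunP => s; rewrite !ffunE; case: insubP => [s' _ _|] //.
Qed.

Lemma fib (R : nzSemiRingType) a g (F : G -> R) :
  \sum_(g' | offQ (predC1 a) g g') F g' = \sum_l F (upd a g l).
Proof.
rewrite (reindex_onto (upd a g) (restr node a)); last by move=> g' /upd_restr.
by apply: eq_bigl => l; rewrite offQ_upd restr_upd eqxx.
Qed.

Lemma prod_delta (Q : pred 'I_N) g g' :
  \prod_(n | Q n) ((restr node n g == restr node n g')%:R : C) = (offQ Q g g')%:R.
Proof.
have [H|H] := boolP (offQ Q g g').
  rewrite big1 // => n Qn; suff -> : restr node n g = restr node n g' by rewrite eqxx.
  apply/ffunP => s; rewrite !ffunE; move/forallP: H => /(_ (val s))/implyP H.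
  by apply/eqP/H; rewrite (eqP (valP s)).
move: H; rewrite negb_forall => /existsP[s]; rewrite negb_imply => /andP[Qs ne].
rewrite (bigD1 (node s) Qs) /= (_ : (restr node (node s) g == _) = false) ?mul0r //.
apply/negbTE; apply: contra ne => /eqP/ffunP/(_ (Sub s (eqxx (node s)))).
by rewrite !ffunE => ->.
Qed.

Definition Eop a (B : op C (lconf d node a)) (g g' : G) : C :=
  B (restr node a g) (restr node a g') * (offQ (predC1 a) g g')%:R.
Arguments Eop : clear implicits.

Lemma Eop_adj a (B : op C (lconf d node a)) :
  (forall i j, B j i = (B i j)^*) -> forall g g', Eop a B g' g = (Eop a B g g')^*.
Proof.
by move=> hB g g'; rewrite /Eop rmorphM /= conjC_nat offQ_sym -hB.
Qed.

Lemma Eop_fib a (B : op C (lconf d node a)) g (F : G -> C) :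
  \sum_g' Eop a B g g' * F g' = \sum_l B (restr node a g) l * F (upd a g l).
Proof.
transitivity (\sum_(g' | offQ (predC1 a) g g') B (restr node a g) (restr node a g') * F g').
  rewrite [RHS]big_mkcond; apply: eq_bigr => g' _; rewrite /Eop.
  by case: offQ; rewrite ?mulr1 ?mulr0 ?mul0r.
by rewrite fib; apply: eq_bigr => l _; rewrite restr_upd.
Qed.

Lemma Eop_psd a (B : op C (lconf d node a)) : psd B ->
  forall w : G -> C, 0 <= \sum_g \sum_g' (w g)^* * Eop a B g g' * w g'.
Proof.
move=> [_ hB] w.
set S := fun g => \sum_l (w g)^* * B (restr node a g) l * w (upd a g l).
have -> : \sum_g \sum_g' (w g)^* * Eop a B g g' * w g' = \sum_g S g.
  apply: eq_bigr => g _; under eq_bigr do rewrite -mulrA.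
  rewrite -mulr_sumr Eop_fib mulr_sumr; apply: eq_bigr => l _; by rewrite mulrA.
have key : \sum_g \sum_l S (upd a g l) = #|lconf d node a|%:R * \sum_g S g.
  transitivity (\sum_g \sum_g' (offQ (predC1 a) g g')%:R * S g').
    apply: eq_bigr => g _; rewrite -fib big_mkcond; apply: eq_bigr => g' _.
    by case: offQ; rewrite ?mul1r ?mul0r.
  rewrite exchange_big mulr_sumr; apply: eq_bigr => g' _ /=.
  rewrite -mulr_suml; congr (_ * _).
  transitivity (\sum_(g | offQ (predC1 a) g' g) (1 : C)).
    rewrite [RHS]big_mkcond; apply: eq_bigr => g _; rewrite offQ_sym.
    by case: offQ.
  by rewrite fib sumr_const; congr (_%:R); apply: eq_card.
have pos : forall g, 0 <= \sum_l S (upd a g l).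
  move=> g; rewrite /S.
  have := hB (fun l => w (upd a g l)); congr (_ <= _).
  by apply: eq_bigr => l _; apply: eq_bigr => l' _; rewrite restr_upd upd_upd.
case: (pickP (@predT G)) => [g0 _ | none]; last first.
  by rewrite big1 // => g; have := none g.
have cpos : (0 < #|lconf d node a|)%N by apply/card_gt0P; exists (restr node a g0).
have : 0 <= \sum_g \sum_l S (upd a g l) by apply: sumr_ge0 => g _; exact: pos.
rewrite key.
by rewrite pmulr_rge0 // ltr0n.
Qed.

Lemma offQ_refl Q g : offQ Q g g.
Proof. by apply/forallP => s; rewrite eqxx implybT. Qed.

Lemma Eop_id a g g' : Eop a (fun l l' => (l == l')%:R) g g' = (g == g')%:R.
Proof.
rewrite /Eop; have [->|ne] := eqVneq g g'.
  by rewrite !eqxx mul1r offQ_refl.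
case: (boolP (offQ _ g g')) => H; rewrite ?mulr0 // mulr1.
suff /negbTE -> : restr node a g != restr node a g' by [].
apply: contra ne => /eqP hr; apply/eqP/ffunP => s.
case: (boolP (node s == a)) => [hs|hs].
  by have /ffunP/(_ (Sub s hs)) := hr; rewrite !ffunE.
by move/forallP: H => /(_ s)/implyP/(_ hs)/eqP.
Qed.

Definition E2 a b (Ba : op C (lconf d node a)) (Bb : op C (lconf d node b)) (g g' : G) :=
  Ba (restr node a g) (restr node a g') * Bb (restr node b g) (restr node b g') *
  (offQ (fun n => (n != a) && (n != b)) g g')%:R.
Arguments E2 : clear implicits.

Lemma Eop_comp a b (Ba : op C (lconf d node a)) (Bb : op C (lconf d node b)) g1 g2 :
  a != b -> \sum_g Eop a Ba g1 g * Eop b Bb g g2 = E2 a b Ba Bb g1 g2.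
Proof.
move=> ab; rewrite Eop_fib.
have rb : forall l, restr node b (upd a g1 l) = restr node b g1.
  move=> l; apply/ffunP => s; rewrite !ffunE insubF //.
  by rewrite (eqP (valP s)); apply/negbTE; rewrite eq_sym.
have hoff : forall l, offQ (predC1 b) (upd a g1 l) g2 =
    (l == restr node a g2) && offQ (fun n => (n != a) && (n != b)) g1 g2.
  move=> l; apply/idP/idP.
    move=> /forallP H; apply/andP; split.
      apply/eqP/ffunP => s; rewrite ffunE.
      have := H (val s); rewrite /= (eqP (valP s)) ab /= ffunE valK.
      by move/eqP.
    apply/forallP => s; apply/implyP => /andP[sa sb].
    have := H s; rewrite /= sb /= ffunE insubF ?(negbTE sa) //.
  move=> /andP[/eqP -> /forallP H]; apply/forallP => s; apply/implyP => /= sb.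
  rewrite ffunE; case: insubP => [s' _ <-|sa]; first by rewrite ffunE.
  by have := H s; rewrite sa sb.
transitivity (\sum_l (Ba (restr node a g1) l * (Bb (restr node b g1) (restr node b g2) *
   (offQ (fun n => (n != a) && (n != b)) g1 g2)%:R)) * (l == restr node a g2)%:R).
  apply: eq_bigr => l _; rewrite /Eop rb hoff.
  by case: (l == _); case: offQ; rewrite /= ?mulr0 ?mulr1 ?mul0r.
by rewrite sum_delta_r /E2 mulrA.
Qed.
End Node.
Arguments upd {N M d} node a g l.
Arguments Eop {C N M d} node a B g g'.
Arguments E2 {C N M d} node a b Ba Bb g g'.

Lemma sum2 (C : numClosedFieldType) (f : 'I_2 -> C) : \sum_y f y = f 0%R + f 1%R.
Proof. by rewrite big_ord_recl big_ord1; congr (_ + f _); apply/val_inj. Qed.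

Section Network.
Local Unset Implicit Arguments.
Variables (C : numClosedFieldType) (N M d : nat) (node : halfedge M -> 'I_N).
Variables (rho : 'I_M -> op C ('I_d * 'I_d)%type)
          (A : forall n, 'I_2 -> op C (lconf d node n)).
Hypothesis hA : forall n, povm (A n).
Variable p : {ffun 'I_N -> 'I_2} -> C.
Hypothesis hp : forall x, p x = network_prob rho A x.
Local Notation G := (gconf M d).

Lemma marg_gen (Q : 'I_N -> pred 'I_2) :
  \sum_(x : {ffun 'I_N -> 'I_2} | [forall n, Q n (x n)]) p x =
  \sum_(g : G) \sum_(g' : G) (\prod_n \sum_(y | Q n y) A n y (restr node n g) (restr node n g'))
     * global_state rho g' g.
Proof.
under eq_bigr do rewrite hp /network_prob.
rewrite exchange_big; apply: eq_bigr => g _; rewrite exchange_big; apply: eq_bigr => g' _.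
rewrite -mulr_suml; congr (_ * _).
rewrite (bigA_distr_big_dep Q (fun n y => A n y (restr node n g) (restr node n g'))).
apply: eq_bigl => x; apply/forallP/familyP => H n; exact: H.
Qed.

Lemma povm_delta (n : 'I_N) (l l' : lconf d node n) : \sum_y A n y l l' = (l == l')%:R.
Proof. by have [_ ->] := hA n. Qed.

Lemma marg1_eq a : marg1 p a =
  \sum_(g : G) \sum_(g' : G) Eop node a (A a 0%R) g g' * global_state rho g' g.
Proof.
rewrite /marg1 (eq_bigl (fun x : {ffun 'I_N -> 'I_2} => [forall n, (n == a) ==> (x n == 0%R)])); last first.
  move=> x; apply/idP/forallP => [/eqP H n| H]; first by apply/implyP => /eqP ->; rewrite H.
  by have /implyP := H a; apply.
rewrite (marg_gen (fun n y => (n == a) ==> (y == 0%R))); apply: eq_bigr => g _; apply: eq_bigr => g' _; congr (_ * _).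
rewrite (bigD1 a) //= eqxx /= big_pred1_eq /Eop; congr (_ * _).
rewrite -(prod_delta C node (fun n => n != a)); apply: eq_bigr => n na.
by rewrite (negbTE na) /= povm_delta.
Qed.

Lemma marg2_eq a b : a != b -> marg2 p a b =
  \sum_(g : G) \sum_(g' : G) E2 node a b (A a 0%R) (A b 0%R) g g' * global_state rho g' g.
Proof.
move=> ab.
rewrite /marg2 (eq_bigl (fun x : {ffun 'I_N -> 'I_2} => [forall n, ((n == a) || (n == b)) ==> (x n == 0%R)])); last first.
  move=> x; apply/idP/forallP => [/andP[/eqP Ha /eqP Hb] n| H].
    by apply/implyP => /orP[] /eqP ->; rewrite ?Ha ?Hb.
  by apply/andP; split; [have /implyP := H a | have /implyP := H b]; apply; rewrite eqxx ?orbT.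
rewrite (marg_gen (fun n y => ((n == a) || (n == b)) ==> (y == 0%R))); apply: eq_bigr => g _; apply: eq_bigr => g' _; congr (_ * _).
rewrite (bigD1 a) //= eqxx /= big_pred1_eq (bigD1 b) /=; last by rewrite eq_sym.
rewrite eqxx orbT big_pred1_eq /E2 mulrA; congr (_ * _).
rewrite -(prod_delta C node (fun n => (n != a) && (n != b))).
apply: eq_bigr => n /andP[na nb]; by rewrite (negbTE na) (negbTE nb) /= povm_delta.
Qed.

Lemma Eop_compl a g g' :
  Eop node a (A a 1%R) g g' = (g == g')%:R - Eop node a (A a 0%R) g g'.
Proof.
rewrite -(Eop_id C node a) /Eop -mulrBl; congr (_ * _).
by rewrite -povm_delta sum2 addrC addKr.
Qed.
End Network.

End PC.
Import PC.

Module PD.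
Local Open Scope ring_scope.

Section Lift.
Variables (C : numClosedFieldType) (M d : nat) (J : finType).
Local Notation G := (gconf M d).
Local Notation Z := (Zt M d J).

Definition lift (O : G -> G -> C) (z z' : Z) : C := O z.1 z'.1 * (z.2 == z'.2)%:R.
Definition app (Kk : Z -> Z -> C) (v : Z -> C) : Z -> C := fun z => \sum_z' Kk z z' * v z'.

Lemma sumZ (F : Z -> C) : \sum_(z : Z) F z = \sum_(g : G) \sum_(h : {ffun 'I_M -> J}) F (g, h).
Proof. by rewrite (pair_bigA _ (fun g h => F (g, h))); apply: eq_bigr => -[]. Qed.

Lemma app_adj (Kk : Z -> Z -> C) u w : (forall z z', Kk z' z = (Kk z z')^*) ->
  ip (app Kk u) w = ip u (app Kk w).
Proof.
move=> hK; rewrite /ip /app.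
under eq_bigr do rewrite rmorph_sum mulr_suml.
rewrite exchange_big /=; apply: eq_bigr => z' _.
rewrite mulr_sumr; apply: eq_bigr => z _.
by rewrite rmorphM /= -hK; ring.
Qed.

Lemma app_comp K1 K2 v :
  app K1 (app K2 v) = app (fun z z'' => \sum_z' K1 z z' * K2 z' z'') v.
Proof.
apply: functional_extensionality => z; rewrite /app.
under eq_bigr do rewrite mulr_sumr.
rewrite exchange_big /=; apply: eq_bigr => z'' _.
by rewrite mulr_suml; apply: eq_bigr => z' _; rewrite mulrA.
Qed.

Lemma app_sub Kk u w : app Kk (vsub u w) = vsub (app Kk u) (app Kk w).
Proof.
apply: functional_extensionality => z; rewrite /app /vsub -sumrB.
by apply: eq_bigr => z' _; rewrite mulrBr.
Qed.

Lemma app_ext K1 K2 v : (forall z z', K1 z z' = K2 z z') -> app K1 v = app K2 v.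
Proof.
move=> h; apply: functional_extensionality => z; rewrite /app.
by apply: eq_bigr => z' _; rewrite h.
Qed.

Lemma lift_comp O1 O2 z z'' :
  \sum_z' lift O1 z z' * lift O2 z' z'' = lift (fun g g'' => \sum_g' O1 g g' * O2 g' g'') z z''.
Proof.
rewrite sumZ /lift mulr_suml; apply: eq_bigr => g' _ /=.
rewrite (eq_bigr (fun h => (z.2 == h)%:R * (O1 z.1 g' * O2 g' z''.1 * (h == z''.2)%:R))).
  by rewrite sum_delta_l.
by move=> h _; ring.
Qed.

Lemma lift_adj O : (forall g g', O g' g = (O g g')^*) ->
  forall z z', lift O z' z = (lift O z z')^*.
Proof. by move=> hO z z'; rewrite /lift rmorphM /= conjC_nat hO eq_sym. Qed.

Lemma lift_psd O : (forall w : G -> C, 0 <= \sum_g \sum_g' (w g)^* * O g g' * w g') ->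
  forall w : Z -> C, 0 <= ip w (app (lift O) w).
Proof.
move=> hO w.
have -> : ip w (app (lift O) w) =
    \sum_h \sum_g \sum_g' (w (g, h))^* * O g g' * w (g', h).
  rewrite /ip sumZ exchange_big; apply: eq_bigr => h _; apply: eq_bigr => g _ /=.
  rewrite /app sumZ mulr_sumr; apply: eq_bigr => g' _ /=.
  rewrite /lift mulr_sumr (eq_bigr (fun h' => (h == h')%:R * ((w (g, h))^* * O g g' * w (g', h'))));
    first by rewrite sum_delta_l.
  by move=> h' _ /=; ring.
by apply: sumr_ge0 => h _; apply: hO.
Qed.

Lemma lift_id z z' : lift (fun g g' => (g == g')%:R) z z' = (z == z')%:R.
Proof.
case: z z' => g h [g' h']; rewrite /lift /= xpair_eqE.
by case: (g == g'); case: (h == h'); rewrite ?mulr1 ?mulr0.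
Qed.

Variable L : 'I_M -> ('I_d * 'I_d) -> J -> C.
Variable rho : 'I_M -> op C ('I_d * 'I_d)%type.
Hypothesis hrho : forall m k k', rho m k k' = \sum_j L m k j * (L m k' j)^*.

Lemma lift_exp O : ip (Psi L) (app (lift O) (Psi L)) =
  \sum_(g : G) \sum_(g' : G) O g g' * global_state rho g' g.
Proof.
rewrite /ip sumZ; under eq_bigr => g _.
  under eq_bigr => h _.
    rewrite /app sumZ mulr_sumr.
    under eq_bigr => g' _.
      rewrite /lift /= mulr_sumr (eq_bigr (fun h' => (h == h')%:R *
          ((Psi L (g, h))^* * (O g g' * Psi L (g', h'))))); last by move=> h' _; ring.
      rewrite sum_delta_l.
    over.
  over.
  rewrite exchange_big /=.
over.
apply: eq_bigr => g _; apply: eq_bigr => g' _ /=.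
transitivity (O g g' * \sum_h (Psi L (g, h))^* * Psi L (g', h)).
  by rewrite mulr_sumr; apply: eq_bigr => h _; ring.
congr (_ * _); rewrite /global_state.
transitivity (\sum_(h : {ffun 'I_M -> J}) \prod_m ((L m (g (m, false), g (m, true)) (h m))^* *
    L m (g' (m, false), g' (m, true)) (h m))).
  by apply: eq_bigr => h _; rewrite /Psi rmorph_prod -big_split.
rewrite -(bigA_distr_bigA (fun m j => (L m (g (m, false), g (m, true)) j)^* *
    L m (g' (m, false), g' (m, true)) j)).
by apply: eq_bigr => m _; rewrite hrho; apply: eq_bigr => j _; rewrite mulrC.
Qed.
End Lift.

Section Vec.
Local Unset Implicit Arguments.
Variables (C : numClosedFieldType) (N M d : nat) (node : halfedge M -> 'I_N) (J : finType).
Variables (rho : 'I_M -> op C ('I_d * 'I_d)%type)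
          (A : forall n, 'I_2 -> op C (lconf d node n)).
Hypothesis hA : forall n, povm (A n).
Variable p : {ffun 'I_N -> 'I_2} -> C.
Hypothesis hp : forall x, p x = network_prob rho A x.
Variable L : 'I_M -> ('I_d * 'I_d) -> J -> C.
Hypothesis hrho : forall m k k', rho m k k' = \sum_j L m k j * (L m k' j)^*.
Hypothesis Lnorm : forall m, \sum_k \sum_j L m k j * (L m k j)^* = 1.
Local Notation G := (gconf M d).
Local Notation Z := (Zt M d J).
Local Notation Psi := (Psi L).

Lemma lift_fib a (B : op C (lconf d node a)) (w : Z -> C) z :
  app (lift (Eop node a B)) w z = \sum_l B (restr node a z.1) l * w (upd node a z.1 l, z.2).
Proof.
rewrite /app sumZ -(@Eop_fib _ _ _ _ node a B z.1 (fun g => w (g, z.2))); apply: eq_bigr => g' _.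
rewrite (eq_bigr (fun h' => (z.2 == h')%:R * (Eop node a B z.1 g' * w (g', h')))).
  exact: sum_delta_l.
by move=> h' _; rewrite /lift /=; ring.
Qed.

Definition Ea a : Z -> Z -> C := lift (Eop node a (A a 0%R)).
Definition ua a := app (Ea a) Psi.
Definition va a := vsub (ua a) (vscale (marg1 p a) Psi).
Definition Sa a : {set 'I_M} := [set m | (node (m, false) == a) || (node (m, true) == a)].

Lemma A_herm a y i j : A a y j i = (A a y i j)^*.
Proof. by have [/(_ y) [H _] _] := hA a; rewrite H. Qed.

Lemma Ea_adj a z z' : Ea a z' z = (Ea a z z')^*.
Proof. apply: lift_adj => g g'; apply: Eop_adj => i j; exact: A_herm. Qed.

Lemma ea_ip a : marg1 p a = ip Psi (ua a).
Proof. by rewrite (marg1_eq _ _ _ _ _ _ _ hA _ hp) /ua /Ea (lift_exp hrho). Qed.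

Lemma ea_real a : (marg1 p a)^* = marg1 p a.
Proof. by rewrite ea_ip ip_conj /ua (app_adj _ _ (Ea_adj a)). Qed.

Lemma m2_ip a b : a != b -> marg2 p a b = ip (ua a) (ua b).
Proof.
move=> ab; rewrite /ua (app_adj _ _ (Ea_adj a)) app_comp (marg2_eq _ _ _ _ _ _ _ hA _ hp _ _ ab).
rewrite -(lift_exp hrho); congr (ip _ _); apply: app_ext => z z''.
by rewrite /Ea lift_comp /lift Eop_comp.
Qed.

Lemma A_psd a y : psd (A a y).
Proof. by have [H _] := hA a. Qed.

Lemma Ecompl_app a (w : Z -> C) :
  app (lift (Eop node a (A a 1%R))) w = vsub w (app (Ea a) w).
Proof.
apply: functional_extensionality => z; rewrite /app /vsub.
rewrite (eq_bigr (fun z' => (z == z')%:R * w z' - Ea a z z' * w z')).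
  by rewrite sumrB sum_delta_l.
move=> z' _; rewrite -lift_id /lift /Ea /lift (Eop_compl _ _ _ _ _ _ hA).
by rewrite -mulrBl; ring.
Qed.

Lemma uu_le a : ip (ua a) (ua a) <= marg1 p a.
Proof.
rewrite ea_ip; set u := ua a.
have h1 := lift_psd (Eop_psd (A_psd a 0%R)) (vsub Psi u).
have h2 := lift_psd (Eop_psd (A_psd a 1%R)) u.
rewrite Ecompl_app in h2; rewrite -/(Ea a) app_sub in h1.
rewrite -/(app (Ea a) Psi) -/u in h1.
rewrite -subr_ge0.
have -> : ip Psi u - ip u u =
    ip (vsub Psi u) (vsub u (app (Ea a) u)) + ip u (vsub u (app (Ea a) u)).
  rewrite ip_subl addrNK ip_subr.
  by rewrite -(app_adj _ _ (Ea_adj a)).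
exact: addr_ge0.
Qed.

Lemma ua_Psi a : ip (ua a) Psi = marg1 p a.
Proof. by rewrite -ip_conj -ea_ip ea_real. Qed.

Lemma ip_Psi_va a : ip Psi (va a) = 0.
Proof. by rewrite /va ip_subr ip_scaler (Psi_norm Lnorm) -ea_ip mulr1 subrr. Qed.

Lemma corr_off a b : a != b -> corr_mx p a b = ip (va a) (va b).
Proof.
move=> ab; rewrite /corr_mx mxE (negbTE ab) (m2_ip a b ab) /va.
rewrite ip_subl !ip_subr !ip_scalel !ip_scaler ua_Psi -!ea_ip (Psi_norm Lnorm) ea_real.
ring.
Qed.

Lemma corr_diag a : ip (va a) (va a) <= corr_mx p a a.
Proof.
rewrite /corr_mx mxE eqxx /va.
rewrite ip_subl !ip_subr !ip_scalel !ip_scaler ua_Psi -!ea_ip (Psi_norm Lnorm) ea_real.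
rewrite -subr_ge0.
have -> : marg1 p a * (1 - marg1 p a) -
  (ip (ua a) (ua a) - marg1 p a * marg1 p a -
   (marg1 p a * marg1 p a - marg1 p a * (marg1 p a * 1))) = marg1 p a - ip (ua a) (ua a)
  by ring.
by rewrite subr_ge0 uu_le.
Qed.

Lemma va_all a : Pop L setT (va a) = fun _ => 0.
Proof.
rewrite Pop_all ip_Psi_va; apply: functional_extensionality => z; exact: mulr0.
Qed.

Lemma Sa_bip a b b' : b != a -> b' != a -> b != b' -> Sa a :&: Sa b :&: Sa b' = set0.
Proof.
move=> ba b'a bb'; apply/setP => m; rewrite !inE.
apply/negbTE; apply/negP => /andP[/andP[Ha Hb] Hb'].
move: ba b'a bb'.
case/orP: Ha => /eqP <-; case/orP: Hb => /eqP <-; case/orP: Hb' => /eqP <-;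
  by rewrite ?eqxx.
Qed.

Lemma va_loc a : Pop L (~: Sa a) (va a) = va a.
Proof.
set T := ~: Sa a.
set fa := fun z : Z => \sum_l A a 0%R (restr node a z.1) l *
   PsiT L (~: T) (upd node a z.1 l, z.2).
have hPT : forall (z : Z) l, PsiT L T (upd node a z.1 l, z.2) = PsiT L T z.
  move=> z l; rewrite /PsiT; apply: eq_bigr => m _.
  case: ifP => // hm; move: hm; rewrite /T in_setC inE negb_or => /andP[h0 h1].
  by rewrite /zm /= !ffunE !insubF //; apply/negbTE.
have hu : forall z, ua a z = PsiT L T z * fa z.
  move=> z; rewrite /ua /Ea lift_fib /fa mulr_sumr; apply: eq_bigr => l _.
  by rewrite (Psi_split L T) hPT mulrCA.
have hva : va a = fun z => PsiT L T z * (fa z - marg1 p a * PsiT L (~: T) z).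
  apply: functional_extensionality => z.
  by rewrite /va /vsub /vscale hu (Psi_split L T z); ring.
rewrite hva (Pop_fact Lnorm) // => z z' H.
have hz : forall m, m \in Sa a -> (forall b, z.1 (m, b) = z'.1 (m, b)) /\ z.2 m = z'.2 m.
  move=> m hm; have := H m; rewrite /T in_setC negbK => /(_ hm).
  by rewrite /zm => -[h0 h1 h2]; split => // -[].
have hPsi : forall (z1 z2 : Z), (forall m, m \in Sa a -> zm z1 m = zm z2 m) ->
    PsiT L (~: T) z1 = PsiT L (~: T) z2.
  move=> z1 z2 Hz; rewrite /PsiT; apply: eq_bigr => m _.
  by case: ifP => // hm; rewrite Hz //; move: hm; rewrite /T !in_setC negbK.
congr (_ - _ * _); last by apply: hPsi => m hm; apply: H; rewrite /T in_setC negbK.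
have hr : restr node a z.1 = restr node a z'.1.
  apply/ffunP => s; rewrite !ffunE.
  case: s => -[m b] /= hs.
  have hm : m \in Sa a by rewrite inE; case: b hs => ->; rewrite ?orbT.
  by have [-> _] := hz m hm.
rewrite /fa hr; apply: eq_bigr => l _; congr (_ * _).
apply: hPsi => m hm; have [h1 h2] := hz m hm.
by rewrite /zm /= !ffunE h2; case: insubP => [? _ _|_]; case: insubP => [? _ _|_];
   rewrite ?h1.
Qed.

Lemma main_ineq (t : 'I_N -> C) : (forall a, 0 <= t a) ->
  \sum_a \sum_(b | b != a) `|corr_mx p a b| * (t a * t b)
    <= \sum_a corr_mx p a a * t a ^+ 2.
Proof.
move=> t0.
have H := @abstract_ineq C Z N M (Pop L) va Sa (Pop_adj L) (Pop_comp Lnorm) va_all va_loc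
  Sa_bip t t0.
apply: le_trans (le_trans _ H) _.
  rewrite le_eqVlt; apply/orP; left; apply/eqP.
  apply: eq_bigr => a _; apply: eq_bigr => b ba; rewrite corr_off // eq_sym //.
apply: ler_sum => a _; apply: ler_wpM2r; first exact: exprn_ge0.
exact: corr_diag.
Qed.
End Vec.

End PD.
Import PD.

Module PH.
Local Open Scope ring_scope.
Local Open Scope sesquilinear_scope.

Section Gram.
Variables (C : numClosedFieldType) (T : finType) (R : op C T).
Hypothesis hR : psd R.
Local Notation n := #|T|.
Definition Rm : 'M[C]_n := \matrix_(i, j) R (enum_val i) (enum_val j).
Definition Pm := spectralmx Rm.
Definition Dm := spectral_diag Rm.
Definition Lg (t : T) (j : 'I_n) : C := (Pm j (enum_rank t))^* * sqrtC (Dm 0 j).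

Lemma sum_enum (F : T -> C) : \sum_t F t = \sum_(i < n) F (enum_val i).
Proof.
by rewrite (reindex (fun i : 'I_n => enum_val i)) //; exists (fun t => enum_rank t) => x _; [exact: enum_valK | exact: enum_rankK].
Qed.

Lemma Rm_herm : Rm ^t* = Rm.
Proof.
apply/matrixP => i j; rewrite !mxE; have [H _] := hR; by rewrite H conjCK.
Qed.

Lemma Rm_normal : Rm \is normalmx.
Proof. by apply/normalmxP; rewrite Rm_herm. Qed.

Lemma Rm_eq : Rm = Pm ^t* *m diag_mx Dm *m Pm.
Proof.
have /orthomx_spectralP H := Rm_normal.
by rewrite {1}H invmx_unitary ?spectral_unitarymx.
Qed.

Lemma Pm_unit : Pm *m Pm ^t* = 1%:M.
Proof. exact/unitarymxP/spectral_unitarymx. Qed.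

Lemma Dm_eq : diag_mx Dm = Pm *m Rm *m Pm ^t*.
Proof. by rewrite Rm_eq !mulmxA Pm_unit mul1mx -mulmxA Pm_unit mulmx1. Qed.

Lemma Dm_ge0 j : 0 <= Dm 0 j.
Proof.
have -> : Dm 0 j = (diag_mx Dm) j j by rewrite mxE eqxx mulr1n.
rewrite Dm_eq; have [_ H] := hR.
suff -> : (Pm *m Rm *m Pm ^t*) j j = \sum_t \sum_t' ((Pm j (enum_rank t))^*)^* * R t t'
   * (Pm j (enum_rank t'))^* by exact: H.
rewrite sum_enum; under [RHS]eq_bigr do rewrite sum_enum.
rewrite mxE [RHS]exchange_big; apply: eq_bigr => i _ /=.
rewrite !mxE mulr_suml; apply: eq_bigr => k _.
by rewrite !mxE !enum_valK conjCK.
Qed.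

Lemma gram t t' : R t t' = \sum_j Lg t j * (Lg t' j)^*.
Proof.
have -> : R t t' = Rm (enum_rank t) (enum_rank t') by rewrite mxE !enum_rankK.
rewrite Rm_eq mxE; apply: eq_bigr => j _.
rewrite mul_mx_diag !mxE /Lg rmorphM /= conjCK.
have hs : (sqrtC (Dm 0 j))^* = sqrtC (Dm 0 j).
  by apply: conj_Creal; apply: sqrtC_real; exact: Dm_ge0.
rewrite hs; set q := sqrtC (Dm 0 j).
have -> : Dm 0 j = q ^+ 2 by rewrite sqrtCK.
ring.
Qed.
End Gram.

End PH.
Import PH.

Module PG.
Local Open Scope ring_scope.
Lemma le_of_eq (R : numDomainType) (x y : R) : x = y -> x <= y.
Proof. by move=> ->. Qed.

Lemma eigen_contra (C : numClosedFieldType) (N : nat) (X : 'M[C]_N) (lam : C)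
  (v : 'rV[C]_N) :
  lam < 0 -> v != 0 -> v *m comparison_mx X = lam *: v ->
  (forall a, 0 <= X a a) ->
  \sum_a \sum_(b | b != a) `|X a b| * (`|v 0 a| * `|v 0 b|)
    <= \sum_a X a a * `|v 0 a| ^+ 2 -> False.
Proof.
move=> lam0 vnz hv Xd hineq.
set t := fun a => `|v 0 a|.
set r := \sum_j t j ^+ 2.
have r0 : 0 < r.
  have [j vj] : exists j, v 0 j != 0.
    case: (pickP (fun j => v 0 j != 0)) => [j hj|H]; first by exists j.
    move/eqP: vnz => vnz; exfalso; apply: vnz; apply/rowP => k; rewrite mxE.
    by have /negbFE/eqP := H k.
  rewrite /r (bigD1 j) //=; apply: (@lt_le_trans _ _ (t j ^+ 2)).
    by rewrite exprn_gt0 // normr_gt0.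
  by rewrite lerDl; apply: sumr_ge0 => i _; rewrite exprn_ge0 // normr_ge0.
set Ds := \sum_j X j j * t j ^+ 2.
set Off := \sum_j \sum_(i | i != j) v 0 i * comparison_mx X i j * (v 0 j)^*.
have hQ : lam * r = Ds + Off.
  transitivity (\sum_j (v *m comparison_mx X) 0 j * (v 0 j)^*).
    rewrite hv /r mulr_sumr; apply: eq_bigr => j _.
    by rewrite !mxE /t normCK mulrA.
  rewrite /Ds /Off -big_split /=; apply: eq_bigr => j _.
  rewrite mxE mulr_suml (bigD1 j) //=; congr (_ + _).
  by rewrite /comparison_mx mxE eqxx ger0_norm // -mulrA mulrCA -normCK.
have hOff : `|Off| <= Ds.
  apply: le_trans hineq.
  apply: le_trans (ler_norm_sum _ _ _) _.
  apply: (@le_trans _ _ (\sum_j \sum_(i | i != j) `|X i j| * (t i * t j))).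
    apply: ler_sum => j _; apply: le_trans (ler_norm_sum _ _ _) _.
    apply: ler_sum => i ij; rewrite /comparison_mx mxE (negbTE ij).
    by rewrite !normrM normrN normr_id norm_conjC /t; apply: le_of_eq; ring.
  rewrite (eq_bigr (fun j => \sum_i (if i != j then `|X i j| * (t i * t j) else 0)));
    last by move=> j _; rewrite big_mkcond.
  rewrite exchange_big /= le_eqVlt; apply/orP; left; apply/eqP; apply: eq_bigr => i _.
  by rewrite [RHS]big_mkcond /=; apply: eq_bigr => j _; rewrite eq_sym.
have Ds0 : 0 <= Ds by apply: sumr_ge0 => j _; rewrite mulr_ge0 ?Xd ?exprn_ge0 ?normr_ge0.
have lr : lam * r < 0 by rewrite pmulr_llt0.
have hO : Off = lam * r - Ds by rewrite hQ addrC addKr.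
have Oneg : Off < 0 by rewrite hO subr_lt0 (lt_le_trans lr).
move: hOff; rewrite ltr0_norm // hO opprB lerBlDr lerDl.
by move=> h; have := lt_le_trans lr h; rewrite ltxx.
Qed.

End PG.
Import PG.

Unset Implicit Arguments.

Theorem mainTheorem3 (C : numClosedFieldType) (N : nat)
    (p : {ffun 'I_N -> 'I_2} -> C) :
  (exists lam : C, lam < 0 /\ eigenvalue (comparison_mx (corr_mx p)) lam) ->
  ~ bipartite_qnet_compatible p.
Proof.
move=> [lam [lam0 /eigenvalueP [v hv vnz]]] [M [d [node [_ [rho [A [hrho [hA hp]]]]]]]].
pose L := fun m => Lg (rho m).
have hrho' : forall m k k', rho m k k' = \sum_j L m k j * (L m k' j)^*.
  by move=> m k k'; rewrite /L (gram (hrho m).1).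
have Lnorm : forall m, \sum_k \sum_j L m k j * (L m k j)^* = 1.
  move=> m; have [_ <-] := hrho m; rewrite /trace; apply: eq_bigr => k _.
  by rewrite hrho'.
apply: (@eigen_contra C N (corr_mx p) lam v lam0 vnz hv).
  move=> a; apply: le_trans (corr_diag _ _ _ _ _ _ _ _ hA _ hp _ hrho' Lnorm a).
  exact: ip_ge0.
exact: (main_ineq _ _ _ _ _ _ _ _ hA _ hp _ hrho' Lnorm _ (fun a => normr_ge0 (v 0 a))).
Qed.
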